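(* Let $\beta\ge2$ and let $T\ge\beta$ be an even integer. Define the two LDSs on $\mathbb{R}$ (state and control in $\mathbb{R}$) $\mathcal{L}^0:=(1,-\beta/T,x_1,(w_t^0)_t,(c_t)_t)$ and $\mathcal{L}^1:=(1,-\beta/T,x_1,(w_t^1)_t,(c_t)_t)$, i.e. with dynamics $x_{t+1}=x_t-\frac\beta Tu_t+w_t^b$ for $b\in\{0,1\}$, where $x_1=1$, $c_t(x,u):=|x|+|u|$ if $t>T/2$ and $c_t(x,u):=0$ otherwise, $w_t^0:=0$ for all $t$, and $w_t^1:=-1$ if $t=T/2$ and $w_t^1:=0$ otherwise. Define $\pi^0(x):=x$ and $\pi^1(x):=0$. Then: (i) $\pi^0\in\mathcal{K}_1(\mathcal{L}^0)$, and the iterates $(x_t,u_t)_{t=1}^T$ produced by following $\pi^0$ in $\mathcal{L}^0$ satisfy $\sum_{t=1}^Tc_t(x_t,u_t)\le\frac{2T}{\beta}e^{-\beta/2}$; (ii) $\pi^1\in\mathcal{K}_1(\mathcal{L}^1)$, and the iterates produced by following $\pi^1$ in $\mathcal{L}^1$ satisfy $\sum_{t=1}^Tc_t(x_t,u_t)=0$.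
   Context: An LDS $(A,B,x_1,(w_t),(c_t))$ evolves as $x_{t+1}=Ax_t+Bu_t+w_t$ with cost $c_t(x_t,u_t)$ at time $t$. A matrix $M$ is $\kappa$-marginally stable if there is $H$ with $\|H^{-1}MH\|\le1$ and $\|M\|,\|H\|,\|H^{-1}\|\le\kappa$. $\mathcal{K}_\kappa(\mathcal{L})$ is the set of linear time-invariant policies $x\mapsto Kx$ such that $A+BK$ is $\kappa$-marginally stable. *)

(* Defs.v *)
From Stdlib Require Import Reals Lra Lia.
Open Scope R_scope.

(* An LDS (A,B,x_1,(w_t),(c_t)) with state and control in R.
   Times are indexed by nat starting at 1. *)
Record LDS := mkLDS {
  lds_A : R;
  lds_B : R;
  lds_x1 : R;
  lds_w : nat -> R;
  lds_c : nat -> R -> R -> R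
}.

(* kappa-marginal stability of a 1x1 matrix M (operator norm = absolute value):
   there is an invertible H with |H^-1 M H| <= 1 and |M|,|H|,|H^-1| <= kappa. *)
Definition marginally_stable (kappa M : R) : Prop :=
  exists H : R, H <> 0 /\ Rabs (/ H * M * H) <= 1 /\
    Rabs M <= kappa /\ Rabs H <= kappa /\ Rabs (/ H) <= kappa.

Definition in_Kkappa (kappa : R) (L : LDS) (pi : R -> R) : Prop :=
  exists K : R, (forall x, pi x = K * x) /\
    marginally_stable kappa (lds_A L + lds_B L * K).

(* traj L pi n = x_{n+1}: the state at time n+1 when following pi in L,
   with u_t = pi x_t and x_{t+1} = A x_t + B u_t + w_t. *)
Fixpoint traj (L : LDS) (pi : R -> R) (n : nat) : R :=
  match n with
  | O => lds_x1 L
  | S m => let x := traj L pi m in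
           lds_A L * x + lds_B L * pi x + lds_w L (S m)
  end.

Definition state (L : LDS) (pi : R -> R) (t : nat) : R := traj L pi (t - 1).

Fixpoint total_cost (L : LDS) (pi : R -> R) (n : nat) : R :=
  match n with
  | O => 0
  | S m => total_cost L pi m +
           lds_c L (S m) (state L pi (S m)) (pi (state L pi (S m)))
  end.

Definition cost_T (T : nat) (t : nat) (x u : R) : R :=
  if Nat.ltb (Nat.div T 2) t then Rabs x + Rabs u else 0.

Definition w0 (t : nat) : R := 0.
Definition w1 (T : nat) (t : nat) : R := if Nat.eqb t (Nat.div T 2) then -1 else 0.

Definition L0 (beta : R) (T : nat) : LDS :=
  mkLDS 1 (- (beta / INR T)) 1 w0 (cost_T T).
Definition L1 (beta : R) (T : nat) : LDS :=
  mkLDS 1 (- (beta / INR T)) 1 (w1 T) (cost_T T).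

Definition pi0 (x : R) : R := x.
Definition pi1 (x : R) : R := 0.

(* Main.v *)
Require Import Defs.
From Stdlib Require Import Reals.
From Stdlib Require Import Lra Lia Arith.
Open Scope R_scope.

Lemma exp_pow_aux (x : R) (n : nat) : exp x ^ n = exp (INR n * x).
Proof.
  induction n as [|n IH].
  - simpl. rewrite Rmult_0_l, exp_0. reflexivity.
  - rewrite S_INR. simpl pow. rewrite IH.
    replace ((INR n + 1) * x) with (x + INR n * x) by ring.
    rewrite exp_plus. reflexivity.
Qed.

Lemma traj0 (beta : R) (T : nat) (n : nat) :
  traj (L0 beta T) pi0 n = (1 - beta / INR T) ^ n.
Proof.
  induction n as [|n IH]; simpl; [reflexivity|].
  rewrite IH. unfold pi0, w0. ring.
Qed.

Lemma cost0 (beta : R) (T : nat) (n : nat) :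
  beta / INR T <> 0 -> 0 <= 1 - beta / INR T ->
  total_cost (L0 beta T) pi0 n =
  2 * ((1 - beta / INR T) ^ (T / 2) - (1 - beta / INR T) ^ (Nat.max n (T / 2)))
    / (beta / INR T).
Proof.
  intros Hb Hq.
  assert (HT : INR T <> 0) by (intro E; apply Hb; rewrite E; unfold Rdiv; rewrite Rinv_0; ring).
  assert (Hbe : beta <> 0) by (intro E; apply Hb; rewrite E; unfold Rdiv; ring).
  set (q := 1 - beta / INR T). fold q in Hq.
  induction n as [|n IH].
  - simpl. field. auto.
  - simpl total_cost. rewrite IH. unfold state.
    replace (S n - 1)%nat with n by lia. rewrite traj0. fold q.
    simpl lds_c. unfold cost_T, pi0.
    destruct (Nat.ltb_spec (T / 2) (S n)).
    + rewrite (Nat.max_l (S n)) by lia.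
      assert (0 <= q ^ n) by (apply pow_le; exact Hq).
      rewrite Rabs_right by lra.
      rewrite Nat.max_l by lia.
      simpl. unfold q. field. auto.
    + rewrite !Nat.max_r by lia. field. auto.
Qed.

Lemma traj1 (beta : R) (T : nat) (n : nat) : (1 <= T / 2)%nat ->
  traj (L1 beta T) pi1 n = if Nat.ltb n (T / 2) then 1 else 0.
Proof.
  intros Hh. induction n as [|n IH].
  - rewrite (proj2 (Nat.ltb_lt 0 (T/2))) by lia. reflexivity.
  - simpl traj. rewrite IH. simpl lds_A. simpl lds_B. simpl lds_w. unfold pi1, w1.
    destruct (Nat.ltb_spec n (T/2)); destruct (Nat.ltb_spec (S n) (T/2));
    destruct (Nat.eqb_spec (S n) (T/2)); try lia; ring.
Qed.

Lemma cost1 (beta : R) (T : nat) (n : nat) : (1 <= T / 2)%nat ->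
  total_cost (L1 beta T) pi1 n = 0.
Proof.
  intros Hh. induction n as [|n IH]; [reflexivity|].
  simpl total_cost. rewrite IH. unfold state.
  replace (S n - 1)%nat with n by lia. rewrite traj1 by exact Hh.
  simpl lds_c. unfold cost_T, pi1.
  destruct (Nat.ltb_spec (T / 2) (S n)); destruct (Nat.ltb_spec n (T/2)); try lia;
  rewrite ?Rabs_R0; ring.
Qed.

Theorem lemma10 (beta : R) (T : nat) :
  2 <= beta -> Nat.Even T -> beta <= INR T ->
  (in_Kkappa 1 (L0 beta T) pi0 /\
   total_cost (L0 beta T) pi0 T <= 2 * INR T / beta * exp (- beta / 2)) /\
  (in_Kkappa 1 (L1 beta T) pi1 /\
   total_cost (L1 beta T) pi1 T = 0).
Proof.
  intros Hb [m Hm] HbT.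
  assert (HTpos : 0 < INR T) by lra.
  assert (Hh : (T / 2 = m)%nat) by (subst T; rewrite Nat.mul_comm, Nat.div_mul; lia).
  assert (Hm1 : (1 <= m)%nat).
  { destruct m; [subst T; simpl in HTpos; lra | lia]. }
  assert (HTm : INR T = 2 * INR m) by (subst T; rewrite mult_INR; reflexivity).
  assert (Hq0 : 0 < beta / INR T) by (apply Rdiv_lt_0_compat; lra).
  assert (Hq1 : beta / INR T <= 1).
  { apply (Rmult_le_reg_r (INR T)); auto. field_simplify; lra. }
  split; split.
  - exists 1. split; [intro; unfold pi0; ring|].
    exists 1. simpl. repeat split; try lra.
    + rewrite Rinv_1, !Rmult_1_r, Rmult_1_l. rewrite Rabs_right; lra.
    + rewrite !Rmult_1_r. rewrite Rabs_right; lra.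
    + rewrite Rabs_right; lra.
    + rewrite Rinv_1, Rabs_right; lra.
  - rewrite cost0 by lra. rewrite Hh.
    set (q := 1 - beta / INR T).
    assert (0 <= q ^ Nat.max T m) by (apply pow_le; unfold q; lra).
    assert (Hqe : q ^ m <= exp (- beta / 2)).
    { apply Rle_trans with (exp (- (beta / INR T)) ^ m).
      - apply pow_incr. split; [unfold q; lra|].
        pose proof (exp_ineq1_le (- (beta / INR T))). unfold q; lra.
      - rewrite exp_pow_aux. right. f_equal. rewrite HTm. field.
        intro E. rewrite E in HTm. lra. }
    apply Rle_trans with (2 * q ^ m / (beta / INR T)).
    + unfold Rdiv. apply Rmult_le_compat_r.
      * left. apply Rinv_0_lt_compat. exact Hq0.
      * lra.
    + replace (2 * q ^ m / (beta / INR T)) with (2 * INR T / beta * q ^ m) by (field; lra).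
      apply Rmult_le_compat_l; [|exact Hqe].
      apply Rmult_le_pos; [lra|]. left. apply Rinv_0_lt_compat. lra.
  - exists 0. split; [intro; unfold pi1; ring|].
    exists 1. simpl. repeat split; try lra.
    + rewrite Rinv_1, !Rmult_1_r, Rmult_0_r, Rplus_0_r, Rmult_1_l. rewrite Rabs_right; lra.
    + rewrite Rmult_0_r, Rplus_0_r. rewrite Rabs_right; lra.
    + rewrite Rabs_right; lra.
    + rewrite Rinv_1, Rabs_right; lra.
  - apply cost1. lia.
Qed.
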